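(* Let $\mathbf M$ be a category endowed both with a model category structure admitting a Postnikov presentation $(\mathsf X,\mathsf Z)$ and with a monoidal structure $(\otimes,I)$. Let $C$ be a comonoid in $\mathbf M$ such that $\mathbf{Comod}_C$ has all finite limits and finite colimits, and let $U_C:\mathbf{Comod}_C\to\mathbf M$ be the forgetful functor. Put $\mathsf W=U_C^{-1}(\mathsf{WE}_{\mathbf M})$ and $\mathsf C=U_C^{-1}(\mathsf{Cof}_{\mathbf M})$. Suppose that $\mathsf{Post}_{\mathsf Z\otimes C}\subset\mathsf W$ and that every morphism $f$ of $\mathbf{Comod}_C$ can be factored (a) as $f=pi$ with $i\in\mathsf C$ and $p\in\mathsf{Post}_{\mathsf Z\otimes C}$, and (b) as $f=qj$ with $j\in\mathsf C\cap\mathsf W$ and $q\in\mathsf{Post}_{\mathsf X\otimes C}$. Then $\mathsf W$, $\mathsf C$ and $\widehat{\mathsf{Post}_{\mathsf X\otimes C}}$ are the weak equivalences, cofibrations and fibrations of a model category structure on $\mathbf{Comod}_C$, and with respect to this structure the adjunction $U_C:\mathbf{Comod}_C\rightleftarrows\mathbf M:-\otimes C$ is a Quillen pair.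
   Context: A comonoid $(C,\Delta,\varepsilon)$ in a monoidal category $(\mathbf M,\otimes,I)$ is an object with a coassociative, counital comultiplication $\Delta:C\to C\otimes C$ and counit $\varepsilon:C\to I$. A right $C$-comodule is an object $M$ with a coassociative, counital coaction $\rho:M\to M\otimes C$; morphisms are maps commuting with coactions; $\mathbf{Comod}_C$ is this category. The forgetful functor $U_C$ has right adjoint $X\mapsto X\otimes C$ (cofree comodule, coaction $X\otimes\Delta$). For a set $\mathsf Y$ of morphisms of $\mathbf M$, $\mathsf Y\otimes C=\{y\otimes C: y\in\mathsf Y\}$, regarded as morphisms between cofree comodules. Postnikov towers: Let $\mathsf S$ be a set of morphisms in a category $\mathbf D$. An $\mathsf S$-Postnikov tower is a morphism $\lim_{\beta<\lambda}Y_\beta\to Y_0$ (whenever this limit exists), where $\lambda$ is an ordinal and $Y:\lambda^{op}\to\mathbf D$ is a functor such that for each $\beta$ with $\beta+1<\lambda$ the map $Y_{\beta+1}\to Y_\beta$ is a pullback of some $x_{\beta+1}:X_{\beta+1}\to X_\beta$ in $\mathsf S$ along some morphism $k_\beta:Y_\beta\to X_\beta$, and $Y_\gamma=\lim_{\beta<\gamma}Y_\beta$ for every limit ordinal $\gamma<\lambda$. $\mathsf{Post}_{\mathsf S}$ is the set of all $\mathsf S$-Postnikov towers; $\widehat{\mathsf S}$ is the set of morphisms that are retracts (in the arrow category) of elements of $\mathsf S$. A Postnikov presentation of a model category $\mathbf M$ is a pair $(\mathsf X,\mathsf Z)$ of sets of morphisms with $\mathsf{Fib}_{\mathbf M}=\widehat{\mathsf{Post}_{\mathsf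 X}}$, $\mathsf{Fib}_{\mathbf M}\cap\mathsf{WE}_{\mathbf M}=\widehat{\mathsf{Post}_{\mathsf Z}}$, such that every morphism factors as a cofibration followed by an element of $\mathsf{Post}_{\mathsf Z}$ and as an acyclic cofibration followed by an element of $\mathsf{Post}_{\mathsf X}$. $\mathsf{WE},\mathsf{Fib},\mathsf{Cof}$ denote weak equivalences, fibrations, cofibrations. *)

(* Defs.v *)
From Stdlib Require Import List ProofIrrelevance.

Record Category := {
  Ob : Type;
  Hom : Ob -> Ob -> Type;
  cid : forall a, Hom a a;
  comp : forall {a b c}, Hom b c -> Hom a b -> Hom a c;
  comp_id_l : forall a b (f : Hom a b), comp (cid b) f = f;
  comp_id_r : forall a b (f : Hom a b), comp f (cid a) = f;
  comp_assoc : forall a b c d (h : Hom c d) (g : Hom b c) (f : Hom a b),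
      comp h (comp g f) = comp (comp h g) f }.

Arguments Hom {_} _ _.
Arguments cid {_} _.
Arguments comp {_ _ _ _} _ _.

Notation "g ∘ f" := (comp g f) (at level 40, left associativity).

Record arrow (D : Category) := Arr { asrc : Ob D; atgt : Ob D; amor : Hom asrc atgt }.
Arguments Arr {_ _ _} _.
Arguments asrc {_} _.
Arguments atgt {_} _.
Arguments amor {_} _.

Definition MorClass (D : Category) := arrow D -> Prop.

Record Functor (J D : Category) := {
  fobj : Ob J -> Ob D;
  fmor : forall {a b}, Hom a b -> Hom (fobj a) (fobj b);
  fmor_id : forall a, fmor (cid a) = cid (fobj a);
  fmor_comp : forall a b c (g : Hom b c) (f : Hom a b), fmor (g ∘ f) = fmor g ∘ fmor f }.
Arguments fobj {_ _} _ _.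
Arguments fmor {_ _} _ {_ _} _.

Definition fmap_arrow {J D} (F : Functor J D) (g : arrow J) : arrow D :=
  Arr (fmor F (amor g)).

Definition FiniteType (T : Type) : Prop := exists l : list T, forall x, In x l.

Definition FiniteCat (J : Category) : Prop :=
  FiniteType (Ob J) /\ forall a b : Ob J, FiniteType (Hom a b).

Definition IsLimitCone {J D} (F : Functor J D) (L : Ob D)
    (pi : forall j, Hom L (fobj F j)) : Prop :=
  (forall j j' (u : Hom j j'), fmor F u ∘ pi j = pi j') /\
  (forall (W : Ob D) (c : forall j, Hom W (fobj F j)),
     (forall j j' (u : Hom j j'), fmor F u ∘ c j = c j') ->
     exists h : Hom W L, (forall j, pi j ∘ h = c j) /\
       forall h' : Hom W L, (forall j, pi j ∘ h' = c j) -> h' = h).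

Definition IsColimitCocone {J D} (F : Functor J D) (L : Ob D)
    (iota : forall j, Hom (fobj F j) L) : Prop :=
  (forall j j' (u : Hom j j'), iota j' ∘ fmor F u = iota j) /\
  (forall (W : Ob D) (c : forall j, Hom (fobj F j) W),
     (forall j j' (u : Hom j j'), c j' ∘ fmor F u = c j) ->
     exists h : Hom L W, (forall j, h ∘ iota j = c j) /\
       forall h' : Hom L W, (forall j, h' ∘ iota j = c j) -> h' = h).

Definition HasFiniteLimits (D : Category) : Prop :=
  forall J : Category, FiniteCat J -> forall F : Functor J D,
    exists L pi, IsLimitCone F L pi.

Definition HasFiniteColimits (D : Category) : Prop :=
  forall J : Category, FiniteCat J -> forall F : Functor J D,
    exists L iota, IsColimitCocone F L iota.

Definition IsRetract {D : Category} (f g : arrow D) : Prop :=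
  exists (i1 : Hom (asrc f) (asrc g)) (r1 : Hom (asrc g) (asrc f))
         (i2 : Hom (atgt f) (atgt g)) (r2 : Hom (atgt g) (atgt f)),
    r1 ∘ i1 = cid _ /\ r2 ∘ i2 = cid _ /\
    amor g ∘ i1 = i2 ∘ amor f /\ amor f ∘ r1 = r2 ∘ amor g.

Definition RetClosure {D : Category} (S : MorClass D) : MorClass D :=
  fun f => exists g, S g /\ IsRetract f g.

Definition LiftingProp {D : Category} (i p : arrow D) : Prop :=
  forall (u : Hom (asrc i) (asrc p)) (v : Hom (atgt i) (atgt p)),
    amor p ∘ u = v ∘ amor i ->
    exists h : Hom (atgt i) (asrc p), h ∘ amor i = u /\ amor p ∘ h = v.

Definition ClassI {D : Category} (A B : MorClass D) : MorClass D :=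
  fun f => A f /\ B f.

Definition ClosedCompId {D : Category} (A : MorClass D) : Prop :=
  (forall a : Ob D, A (Arr (cid a))) /\
  (forall a b c (f : Hom a b) (g : Hom b c), A (Arr f) -> A (Arr g) -> A (Arr (g ∘ f))).

Definition HasFactorization {D : Category} (L R : MorClass D) : Prop :=
  forall a b (f : Hom a b), exists c (i : Hom a c) (p : Hom c b),
    f = p ∘ i /\ L (Arr i) /\ R (Arr p).

(* Model category structure (Dwyer–Spalinski style: finite limits and
   colimits, MC1–MC5, each class contains identities and is closed under
   composition). *)
Definition IsModelStructure (D : Category) (W Cof Fib : MorClass D) : Prop :=
  HasFiniteLimits D /\ HasFiniteColimits D /\
  ClosedCompId W /\ ClosedCompId Cof /\ ClosedCompId Fib /\
  (forall a b c (f : Hom a b) (g : Hom b c),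
     (W (Arr f) -> W (Arr g) -> W (Arr (g ∘ f))) /\
     (W (Arr f) -> W (Arr (g ∘ f)) -> W (Arr g)) /\
     (W (Arr g) -> W (Arr (g ∘ f)) -> W (Arr f))) /\
  (forall f g, IsRetract f g -> W g -> W f) /\
  (forall f g, IsRetract f g -> Cof g -> Cof f) /\
  (forall f g, IsRetract f g -> Fib g -> Fib f) /\
  (forall i p, Cof i -> W i -> Fib p -> LiftingProp i p) /\
  (forall i p, Cof i -> Fib p -> W p -> LiftingProp i p) /\
  HasFactorization (ClassI Cof W) Fib /\
  HasFactorization Cof (ClassI Fib W).

(* Quillen pair, stated for the left adjoint F: F preserves cofibrations
   and acyclic cofibrations. *)
Definition LeftQuillen {D E : Category} (F : Functor D E)
    (WD CofD : MorClass D) (WE CofE : MorClass E) : Prop :=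
  (forall g, CofD g -> CofE (fmap_arrow F g)) /\
  (forall g, CofD g -> WD g -> CofE (fmap_arrow F g) /\ WE (fmap_arrow F g)).

(* An ordinal, presented as a well-ordered type *)
Record WellOrder := {
  wo_car : Type;
  wo_lt : wo_car -> wo_car -> Prop;
  wo_irrefl : forall a, ~ wo_lt a a;
  wo_trans : forall a b c, wo_lt a b -> wo_lt b c -> wo_lt a c;
  wo_total : forall a b, wo_lt a b \/ a = b \/ wo_lt b a;
  wo_wf : well_founded wo_lt }.

Definition wo_le (w : WellOrder) (a b : wo_car w) : Prop := wo_lt w a b \/ a = b.

Definition IsSucc (w : WellOrder) (b s : wo_car w) : Prop :=
  wo_lt w b s /\ forall x, wo_lt w b x -> wo_le w s x.

Definition IsLimitOrd (w : WellOrder) (g : wo_car w) : Prop :=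
  (exists b, wo_lt w b g) /\ forall b, wo_lt w b g -> exists d, wo_lt w b d /\ wo_lt w d g.

(* A functor Y : lambda^op -> D *)
Record OpDiagram (D : Category) (w : WellOrder) := {
  dY : wo_car w -> Ob D;
  dmap : forall a b, wo_le w b a -> Hom (dY a) (dY b);
  dmap_id : forall a (h : wo_le w a a), dmap a a h = cid (dY a);
  dmap_comp : forall a b c (h1 : wo_le w b a) (h2 : wo_le w c b) (h3 : wo_le w c a),
      dmap b c h2 ∘ dmap a b h1 = dmap a c h3 }.
Arguments dY {_ _} _ _.
Arguments dmap {_ _} _ _ _ _.

Definition IsPullback {D : Category} {X Y Z P : Ob D}
    (x : Hom X Z) (k : Hom Y Z) (p : Hom P X) (q : Hom P Y) : Prop :=
  x ∘ p = k ∘ q /\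
  forall (W : Ob D) (u : Hom W X) (v : Hom W Y), x ∘ u = k ∘ v ->
    exists h : Hom W P, (p ∘ h = u /\ q ∘ h = v) /\
      forall h' : Hom W P, p ∘ h' = u /\ q ∘ h' = v -> h' = h.

Definition IsSTower {D : Category} (S : MorClass D) {w : WellOrder}
    (Y : OpDiagram D w) : Prop :=
  (forall b s (hs : IsSucc w b s),
     exists (X1 X0 : Ob D) (x : Hom X1 X0) (k : Hom (dY Y b) X0) (h : Hom (dY Y s) X1),
       S (Arr x) /\ IsPullback x k h (dmap Y s b (or_introl (proj1 hs)))) /\
  (forall g, IsLimitOrd w g ->
     forall (W : Ob D) (c : forall b, wo_lt w b g -> Hom W (dY Y b)),
       (forall b b' (hb : wo_lt w b g) (hb' : wo_lt w b' g) (h : wo_le w b b'),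
          dmap Y b' b h ∘ c b' hb' = c b hb) ->
       exists u : Hom W (dY Y g),
         (forall b (hb : wo_lt w b g), dmap Y g b (or_introl hb) ∘ u = c b hb) /\
         forall u' : Hom W (dY Y g),
           (forall b (hb : wo_lt w b g), dmap Y g b (or_introl hb) ∘ u' = c b hb) -> u' = u).

Definition IsTowerLimit {D : Category} {w : WellOrder} (Y : OpDiagram D w)
    (L : Ob D) (pi : forall b, Hom L (dY Y b)) : Prop :=
  (forall a b (h : wo_le w b a), dmap Y a b h ∘ pi a = pi b) /\
  forall (W : Ob D) (c : forall b, Hom W (dY Y b)),
    (forall a b (h : wo_le w b a), dmap Y a b h ∘ c a = c b) ->
    exists u : Hom W L, (forall b, pi b ∘ u = c b) /\
      forall u' : Hom W L, (forall b, pi b ∘ u' = c b) -> u' = u.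

Definition Post {D : Category} (S : MorClass D) : MorClass D :=
  fun f => exists (w : WellOrder) (z : wo_car w) (hz : forall x, wo_le w z x)
                  (Y : OpDiagram D w) (L : Ob D) (pi : forall b, Hom L (dY Y b)),
    IsSTower S Y /\ IsTowerLimit Y L pi /\ f = Arr (pi z).

Definition PostnikovPresentation (D : Category) (W Cof Fib X Z : MorClass D) : Prop :=
  (forall f, Fib f <-> RetClosure (Post X) f) /\
  (forall f, (Fib f /\ W f) <-> RetClosure (Post Z) f) /\
  HasFactorization Cof (Post Z) /\
  HasFactorization (ClassI Cof W) (Post X).

Record Monoidal (M : Category) := {
  tens : Ob M -> Ob M -> Ob M;
  tensm : forall {a b a' b'}, Hom a a' -> Hom b b' -> Hom (tens a b) (tens a' b');
  tensm_id : forall a b, tensm (cid a) (cid b) = cid (tens a b);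
  tensm_comp : forall a b c a' b' c' (f : Hom a b) (g : Hom b c) (f' : Hom a' b') (g' : Hom b' c'),
      tensm (g ∘ f) (g' ∘ f') = tensm g g' ∘ tensm f f';
  munit : Ob M;
  assoc : forall a b c, Hom (tens (tens a b) c) (tens a (tens b c));
  assoc_inv : forall a b c, Hom (tens a (tens b c)) (tens (tens a b) c);
  assoc_iso1 : forall a b c, assoc_inv a b c ∘ assoc a b c = cid _;
  assoc_iso2 : forall a b c, assoc a b c ∘ assoc_inv a b c = cid _;
  assoc_nat : forall a b c a' b' c' (f : Hom a a') (g : Hom b b') (h : Hom c c'),
      assoc a' b' c' ∘ tensm (tensm f g) h = tensm f (tensm g h) ∘ assoc a b c;
  lunit : forall a, Hom (tens munit a) a;
  lunit_inv : forall a, Hom a (tens munit a);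
  lunit_iso1 : forall a, lunit_inv a ∘ lunit a = cid _;
  lunit_iso2 : forall a, lunit a ∘ lunit_inv a = cid _;
  lunit_nat : forall a b (f : Hom a b), f ∘ lunit a = lunit b ∘ tensm (cid munit) f;
  runit : forall a, Hom (tens a munit) a;
  runit_inv : forall a, Hom a (tens a munit);
  runit_iso1 : forall a, runit_inv a ∘ runit a = cid _;
  runit_iso2 : forall a, runit a ∘ runit_inv a = cid _;
  runit_nat : forall a b (f : Hom a b), f ∘ runit a = runit b ∘ tensm f (cid munit);
  pentagon : forall a b c d,
      assoc a b (tens c d) ∘ assoc (tens a b) c d
      = tensm (cid a) (assoc b c d) ∘ assoc a (tens b c) d ∘ tensm (assoc a b c) (cid d);
  triangle : forall a b,
      tensm (cid a) (lunit b) ∘ assoc a munit b = tensm (runit a) (cid b) }.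

Arguments tens {_} _ _ _.
Arguments tensm {_} _ {_ _ _ _} _ _.
Arguments munit {_} _.
Arguments assoc {_} _ _ _ _.
Arguments assoc_inv {_} _ _ _ _.
Arguments lunit {_} _ _.
Arguments runit {_} _ _.

Section Comod.
Context {M : Category} (T : Monoidal M).

Record Comonoid := {
  co_ob : Ob M;
  co_delta : Hom co_ob (tens T co_ob co_ob);
  co_eps : Hom co_ob (munit T);
  co_coassoc : assoc T _ _ _ ∘ (tensm T co_delta (cid co_ob) ∘ co_delta)
               = tensm T (cid co_ob) co_delta ∘ co_delta;
  co_lcounit : lunit T _ ∘ (tensm T co_eps (cid co_ob) ∘ co_delta) = cid _;
  co_rcounit : runit T _ ∘ (tensm T (cid co_ob) co_eps ∘ co_delta) = cid _ }.

Variable C : Comonoid.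

Record Comodule := {
  cm_car : Ob M;
  cm_coact : Hom cm_car (tens T cm_car (co_ob C));
  cm_coassoc : assoc T _ _ _ ∘ (tensm T cm_coact (cid (co_ob C)) ∘ cm_coact)
               = tensm T (cid cm_car) (co_delta C) ∘ cm_coact;
  cm_counit : runit T _ ∘ (tensm T (cid cm_car) (co_eps C) ∘ cm_coact) = cid _ }.

Record ComodHom (A B : Comodule) := {
  ch_map : Hom (cm_car A) (cm_car B);
  ch_comm : cm_coact B ∘ ch_map = tensm T ch_map (cid (co_ob C)) ∘ cm_coact A }.

Arguments ch_map {_ _} _.
Arguments ch_comm {_ _} _.

Lemma ComodHom_eq A B (f g : ComodHom A B) : ch_map f = ch_map g -> f = g.
Proof.
  destruct f as [f hf], g as [g hg]; simpl; intros ->.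
  f_equal; apply proof_irrelevance.
Qed.

Lemma ch_id_comm (A : Comodule) :
  cm_coact A ∘ cid (cm_car A) = tensm T (cid (cm_car A)) (cid (co_ob C)) ∘ cm_coact A.
Proof. rewrite tensm_id, comp_id_l, comp_id_r; reflexivity. Qed.

Definition ch_id (A : Comodule) : ComodHom A A := {| ch_map := cid _; ch_comm := ch_id_comm A |}.

Lemma ch_comp_comm (A B D : Comodule) (g : ComodHom B D) (f : ComodHom A B) :
  cm_coact D ∘ (ch_map g ∘ ch_map f)
  = tensm T (ch_map g ∘ ch_map f) (cid (co_ob C)) ∘ cm_coact A.
Proof.
  rewrite comp_assoc, (ch_comm g), <- comp_assoc, (ch_comm f), comp_assoc.
  rewrite <- tensm_comp, comp_id_l. reflexivity.
Qed.

Definition ch_comp A B D (g : ComodHom B D) (f : ComodHom A B) : ComodHom A D :=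
  {| ch_map := ch_map g ∘ ch_map f; ch_comm := @ch_comp_comm A B D g f |}.

Definition Comod : Category.
Proof.
  refine {| Ob := Comodule; Hom := ComodHom; cid := ch_id; comp := ch_comp |}.
  - intros; apply ComodHom_eq; simpl; apply comp_id_l.
  - intros; apply ComodHom_eq; simpl; apply comp_id_r.
  - intros; apply ComodHom_eq; simpl; apply comp_assoc.
Defined.

Definition ForgetComod : Functor Comod M.
Proof.
  refine {| fobj := (cm_car : Ob Comod -> Ob M);
            fmor := fun a b (f : ComodHom a b) => ch_map f |}.
  - intros; reflexivity.
  - intros; reflexivity.
Defined.

Definition cofree_coact (X : Ob M) : Hom (tens T X (co_ob C)) (tens T (tens T X (co_ob C)) (co_ob C)) :=
  assoc_inv T X (co_ob C) (co_ob C) ∘ tensm T (cid X) (co_delta C).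

(* Y (x) C = { y (x) C : y in Y }, as morphisms between cofree comodules:
   g is in Y (x) C iff its source and target are the cofree comodules
   X1 (x) C, X0 (x) C (with the cofree coaction) and its underlying map is
   y (x) id_C for some y : X1 -> X0 in Y. *)
Definition TensC (Y : MorClass M) : MorClass Comod :=
  fun g => exists (X1 X0 : Ob M) (y : Hom X1 X0),
    Y (Arr y) /\
    Arr (ch_map (amor g)) = Arr (tensm T y (cid (co_ob C))) /\
    Arr (cm_coact (asrc g)) = Arr (cofree_coact X1) /\
    Arr (cm_coact (atgt g)) = Arr (cofree_coact X0).

Definition Preim (A : MorClass M) : MorClass Comod :=
  fun g => A (fmap_arrow ForgetComod g).

End Comod.

(* Main.v *)
Require Import Defs.
From Stdlib Require Import ProofIrrelevance FunctionalExtensionality ClassicalEpsilon Program.Equality.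

Lemma assoc_rw {D : Category} {a b c e : Ob D} (g : Hom b c) (f : Hom a b) (k : Hom a c) (x : Hom e a) :
  g ∘ f = k -> g ∘ (f ∘ x) = k ∘ x.
Proof. intros H. rewrite comp_assoc, H. reflexivity. Qed.

Lemma lift_retract {D : Category} (i p q : arrow D) :
  IsRetract p q -> LiftingProp i q -> LiftingProp i p.
Proof.
  intros [i1 [r1 [i2 [r2 [H1 [H2 [H3 H4]]]]]]] Hq u v Huv.
  destruct (Hq (i1 ∘ u) (i2 ∘ v)) as [k [Hk1 Hk2]].
  { rewrite comp_assoc, H3, <- comp_assoc, Huv, comp_assoc. reflexivity. }
  exists (r1 ∘ k). split.
  - rewrite <- comp_assoc, Hk1, comp_assoc, H1, comp_id_l. reflexivity.
  - rewrite comp_assoc, H4, <- comp_assoc, Hk2, comp_assoc, H2, comp_id_l. reflexivity.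
Qed.

Lemma retract_arg {D : Category} (a e b : Ob D) (j : Hom a e) (q : Hom e b) :
  LiftingProp (Arr j) (Arr (q ∘ j)) -> IsRetract (Arr (q ∘ j)) (Arr q).
Proof.
  intro H. destruct (H (cid a) q) as [r [Hr1 Hr2]].
  { simpl. rewrite comp_id_r. reflexivity. }
  exists j, r, (cid b), (cid b). simpl. split; [exact Hr1|]. split; [apply comp_id_l|].
  split. rewrite comp_id_l; reflexivity. rewrite comp_id_l; exact Hr2.
Qed.

Lemma retract_refl {D : Category} (f : arrow D) : IsRetract f f.
Proof.
  exists (cid _), (cid _), (cid _), (cid _).
  rewrite !comp_id_l, !comp_id_r. repeat split; reflexivity.
Qed.

Lemma lift_id {D : Category} (i : arrow D) (a : Ob D) : LiftingProp i (Arr (cid a)).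
Proof.
  intros u v Huv. exists v. simpl in *. rewrite comp_id_l in Huv. split; [symmetry; exact Huv| apply comp_id_l].
Qed.

Lemma lift_comp {D : Category} (i : arrow D) (a b c : Ob D) (f : Hom a b) (g : Hom b c) :
  LiftingProp i (Arr f) -> LiftingProp i (Arr g) -> LiftingProp i (Arr (g ∘ f)).
Proof.
  intros Hf Hg u v Huv. simpl in *.
  destruct (Hg (f ∘ u) v) as [k [Hk1 Hk2]]. { simpl. rewrite comp_assoc. exact Huv. }
  destruct (Hf u k) as [h [Hh1 Hh2]]. { simpl. symmetry. exact Hk1. }
  simpl in *. exists h. split; [exact Hh1|]. rewrite <- comp_assoc, Hh2. exact Hk2.
Qed.

Definition blt (a b : bool) : Prop := a = false /\ b = true.

Lemma blt_wf : well_founded blt.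
Proof.
  assert (H0 : Acc blt false). { constructor. intros y [_ H]. discriminate. }
  intros a. destruct a; [|exact H0]. constructor. intros y [-> _]. exact H0.
Qed.

Definition bwo : WellOrder.
Proof.
  refine {| wo_car := bool; wo_lt := blt; wo_wf := blt_wf |}.
  - intros a [H1 H2]. congruence.
  - intros a b c [H1 H2] [H3 H4]. congruence.
  - intros [|] [|]; unfold blt; intuition congruence.
Defined.

Lemma bbad : wo_le bwo true false -> False.
Proof. intros [[H _]|H]; discriminate. Qed.

Definition bobj {D : Category} (X1 X0 : Ob D) (b : bool) : Ob D := if b then X1 else X0.

Definition bmap {D : Category} (X1 X0 : Ob D) (x : Hom X1 X0) (a b : bool) :
  wo_le bwo b a -> Hom (bobj X1 X0 a) (bobj X1 X0 b) :=
  match a as a', b as b' return wo_le bwo b' a' -> Hom (bobj X1 X0 a') (bobj X1 X0 b') with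
  | true, true => fun _ => cid X1
  | true, false => fun _ => x
  | false, false => fun _ => cid X0
  | false, true => fun h => False_rect _ (bbad h)
  end.

Definition bdiag {D : Category} (X1 X0 : Ob D) (x : Hom X1 X0) : OpDiagram D bwo.
Proof.
  refine {| dY := bobj X1 X0 : wo_car bwo -> Ob D; dmap := bmap X1 X0 x |}.
  - intros [|] h; reflexivity.
  - intros [|] [|] [|] h1 h2 h3; simpl;
      try (exfalso; apply bbad; assumption); rewrite ?comp_id_l, ?comp_id_r; reflexivity.
Defined.

Definition bpi {D : Category} (X1 X0 : Ob D) (x : Hom X1 X0) (b : bool) : Hom X1 (bobj X1 X0 b) :=
  match b as b' return Hom X1 (bobj X1 X0 b') with true => cid X1 | false => x end.

Lemma single_post {D : Category} (S : MorClass D) (X1 X0 : Ob D) (x : Hom X1 X0) :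
  S (Arr x) -> Post S (Arr x).
Proof.
  intros HS.
  assert (hz : forall y : wo_car bwo, wo_le bwo false y).
  { intros [|]. left. split; reflexivity. right. reflexivity. }
  exists bwo, false, hz, (bdiag X1 X0 x), X1, (bpi X1 X0 x).
  split; [split|split].
  - intros b s hs. destruct b, s; try (exfalso; destruct hs as [[? ?] _]; discriminate).
    exists X1, X0, x, (cid X0), (cid X1). split; [exact HS|].
    simpl. split. rewrite comp_id_l, comp_id_r. reflexivity.
    intros W u v Huv. exists u. rewrite comp_id_l in Huv. split.
    + split. apply comp_id_l. exact Huv.
    + intros h' [H1 H2]. rewrite comp_id_l in H1. exact H1.
  - intros g Hg. exfalso. destruct Hg as [[b Hb] Hl]. destruct (Hl b Hb) as [d [[H1 H2] [H3 H4]]]. congruence.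
  - split.
  + intros [|] [|] h; simpl; try (exfalso; apply bbad; assumption); rewrite ?comp_id_l, ?comp_id_r; reflexivity.
  + intros W c Hc. exists (c true). split.
    * intros [|]; simpl. apply comp_id_l.
      assert (hh : wo_le bwo false true) by (left; split; reflexivity).
      exact (Hc true false hh).
    * intros u' Hu'. specialize (Hu' true). simpl in Hu'. rewrite comp_id_l in Hu'. exact Hu'.
  - reflexivity.
Qed.

Definition tgood {D : Category} {w : WellOrder} (Y : OpDiagram D w) (A B : Ob D) (j : Hom A B)
  (L : Ob D) (pi : forall b, Hom L (dY Y b)) (u : Hom A L) (z : wo_car w)
  (hz : forall x, wo_le w z x) (v : Hom B (dY Y z)) (a : wo_car w)
  (rec : forall b, wo_lt w b a -> option (Hom B (dY Y b))) (h : Hom B (dY Y a)) : Prop :=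
  h ∘ j = pi a ∘ u /\ dmap Y a z (hz a) ∘ h = v /\
  forall b (hb : wo_lt w b a), rec b hb = Some (dmap Y a b (or_introl hb) ∘ h).

Definition tstep {D : Category} {w : WellOrder} (Y : OpDiagram D w) (A B : Ob D) (j : Hom A B)
  (L : Ob D) (pi : forall b, Hom L (dY Y b)) (u : Hom A L) (z : wo_car w)
  (hz : forall x, wo_le w z x) (v : Hom B (dY Y z)) (a : wo_car w)
  (rec : forall b, wo_lt w b a -> option (Hom B (dY Y b))) : option (Hom B (dY Y a)) :=
  match excluded_middle_informative (exists h, tgood Y A B j L pi u z hz v a rec h) with
  | left e => Some (proj1_sig (constructive_indefinite_description _ e))
  | right _ => None
  end.

Definition tG {D : Category} {w : WellOrder} (Y : OpDiagram D w) (A B : Ob D) (j : Hom A B)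
  (L : Ob D) (pi : forall b, Hom L (dY Y b)) (u : Hom A L) (z : wo_car w)
  (hz : forall x, wo_le w z x) (v : Hom B (dY Y z)) : forall a, option (Hom B (dY Y a)) :=
  Fix (wo_wf w) (fun a => option (Hom B (dY Y a))) (tstep Y A B j L pi u z hz v).

Lemma tG_eq {D : Category} {w : WellOrder} (Y : OpDiagram D w) (A B : Ob D) (j : Hom A B)
  (L : Ob D) (pi : forall b, Hom L (dY Y b)) (u : Hom A L) (z : wo_car w)
  (hz : forall x, wo_le w z x) (v : Hom B (dY Y z)) a :
  tG Y A B j L pi u z hz v a = tstep Y A B j L pi u z hz v a (fun b _ => tG Y A B j L pi u z hz v b).
Proof.
  unfold tG. refine (Fix_eq _ _ _ _ a). intros x f g Hfg.
  assert (f = g) as ->. { apply functional_extensionality_dep; intro y.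
    apply functional_extensionality_dep; intro p. apply Hfg. }
  reflexivity.
Qed.

Lemma tstep_some {D : Category} {w : WellOrder} (Y : OpDiagram D w) (A B : Ob D) (j : Hom A B)
  (L : Ob D) (pi : forall b, Hom L (dY Y b)) (u : Hom A L) (z : wo_car w)
  (hz : forall x, wo_le w z x) (v : Hom B (dY Y z)) a rec :
  (exists h, tgood Y A B j L pi u z hz v a rec h) ->
  exists h, tstep Y A B j L pi u z hz v a rec = Some h /\ tgood Y A B j L pi u z hz v a rec h.
Proof.
  intros E. unfold tstep. destruct (excluded_middle_informative _) as [e|n]; [|contradiction].
  eexists. split. reflexivity. exact (proj2_sig (constructive_indefinite_description _ e)).
Qed.

Lemma zcomp {D : Category} {w : WellOrder} (Y : OpDiagram D w) (B : Ob D) (z : wo_car w)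
  (hz : forall x, wo_le w z x) (v : Hom B (dY Y z)) a b (hb : wo_lt w b a)
  (h : Hom B (dY Y a)) (g : Hom B (dY Y b)) :
  dmap Y a b (or_introl hb) ∘ h = g -> dmap Y b z (hz b) ∘ g = v -> dmap Y a z (hz a) ∘ h = v.
Proof.
  intros H1 H2. rewrite <- (dmap_comp _ _ Y a b z (or_introl hb) (hz b) (hz a)).
  rewrite <- comp_assoc, H1. exact H2.
Qed.

Lemma wo_lt_asym (w : WellOrder) a b : wo_lt w a b -> wo_le w b a -> False.
Proof.
  intros H [H'|e]. apply (wo_irrefl w a). eapply wo_trans; eauto. subst. eapply wo_irrefl; eauto.
Qed.

Lemma tower_main {D : Category} (S : MorClass D) (i : arrow D)
  (HS : forall s, S s -> LiftingProp i s)
  (w : WellOrder) (z : wo_car w) (hz : forall x, wo_le w z x) (Y : OpDiagram D w)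
  (L : Ob D) (pi : forall b, Hom L (dY Y b))
  (HT : IsSTower S Y) (Hcone : forall a b (h : wo_le w b a), dmap Y a b h ∘ pi a = pi b)
  (u : Hom (asrc i) L) (v : Hom (atgt i) (dY Y z)) (Huv : pi z ∘ u = v ∘ amor i) :
  forall a, exists h, tG Y _ _ (amor i) L pi u z hz v a = Some h /\
     tgood Y _ _ (amor i) L pi u z hz v a (fun b _ => tG Y _ _ (amor i) L pi u z hz v b) h.
Proof.
  destruct HT as [Hsucc Hlimo].
  set (G := tG Y _ _ (amor i) L pi u z hz v).
  intro a. induction a as [a IH] using (well_founded_ind (wo_wf w)).
  unfold G. rewrite tG_eq. apply tstep_some. fold G.
  destruct (classic (exists b, wo_lt w b a)) as [[b0 hb0]|Hno].
  2:{
    destruct (hz a) as [Hza|Hza]. { exfalso. apply Hno. eauto. }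
    subst a. exists v. split; [symmetry; exact Huv|]. split.
    - rewrite dmap_id. apply comp_id_l.
    - intros b hb. exfalso. apply Hno. eauto. }
  destruct (classic (exists b, IsSucc w b a)) as [[b Hs]|Hnos].
  -
    destruct (IH b (proj1 Hs)) as [gb [Egb [Gb1 [Gb2 Gb3]]]].
    destruct (Hsucc b a Hs) as [X1 [X0 [x [k [hp [Hx [Hpb1 Hpb2]]]]]]].
    set (q := dmap Y a b (or_introl (proj1 Hs))) in *.
    assert (Hq : q ∘ pi a = pi b) by apply Hcone.
    assert (Hsq : x ∘ (hp ∘ (pi a ∘ u)) = k ∘ (pi b ∘ u)).
    { rewrite comp_assoc, Hpb1, <- comp_assoc, (comp_assoc _ _ _ _ _ q), Hq. reflexivity. }
    destruct (HS _ Hx (hp ∘ (pi a ∘ u)) (k ∘ gb)) as [l [Hl1 Hl2]].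
    { simpl. rewrite Hsq, <- comp_assoc, Gb1. reflexivity. }
    simpl in Hl1, Hl2.
    destruct (Hpb2 _ l gb Hl2) as [h [[Hh1 Hh2] _]].
    exists h. split; [|split].
    + destruct (Hpb2 _ _ _ Hsq) as [h0 [_ Hu0]].
      rewrite (Hu0 (h ∘ amor i)), (Hu0 (pi a ∘ u)); [reflexivity| |].
      * split; [reflexivity|]. rewrite comp_assoc, Hq. reflexivity.
      * split. rewrite comp_assoc, Hh1. exact Hl1.
        rewrite comp_assoc, Hh2. exact Gb1.
    + exact (zcomp Y _ z hz v a b (proj1 Hs) h gb Hh2 Gb2).
    + intros c hc. destruct (wo_total w c b) as [Hcb|[->|Hbc]].
      * rewrite (Gb3 c Hcb), <- Hh2. unfold q. rewrite comp_assoc, (dmap_comp _ _ Y a b c _ _ (or_introl hc)). reflexivity.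
      * rewrite Egb, <- Hh2. unfold q. do 3 f_equal. apply proof_irrelevance.
      * exfalso. apply (wo_lt_asym w c a hc). exact (proj2 Hs c Hbc).
  -
    assert (Hlim : IsLimitOrd w a).
    { split; [eauto|]. intros b hb.
      apply NNPP. intro Hn. apply Hnos. exists b. split; [exact hb|].
      intros x Hx. destruct (wo_total w x a) as [Hxa|[->|Hax]].
      - exfalso. apply Hn. eauto.
      - right. reflexivity.
      - left. exact Hax. }
    pose (c := fun b (hb : wo_lt w b a) => proj1_sig (constructive_indefinite_description _ (IH b hb))).
    assert (Hc : forall b hb, G b = Some (c b hb) /\ tgood Y _ _ (amor i) L pi u z hz v b (fun b' _ => G b') (c b hb)).
    { intros b hb. exact (proj2_sig (constructive_indefinite_description _ (IH b hb))). }
    assert (Hcc : forall b b' (hb : wo_lt w b a) (hb' : wo_lt w b' a) (h : wo_le w b b'),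
               dmap Y b' b h ∘ c b' hb' = c b hb).
    { intros b b' hb hb' h. destruct h as [hbb|e].
      - destruct (Hc b' hb') as [_ [_ [_ H3]]]. specialize (H3 b hbb).
        rewrite (proj1 (Hc b hb)) in H3. injection H3 as H3. symmetry. exact H3.
      - subst b'. rewrite dmap_id, comp_id_l. f_equal. apply proof_irrelevance. }
    destruct (Hlimo a Hlim _ c Hcc) as [h [Hh1 Hh2]].
    exists h. split; [|split].
    + destruct (Hlimo a Hlim _ (fun b hb => pi b ∘ u)) as [h0 [_ Hu0]].
      { intros b b' hb hb' hh. rewrite comp_assoc, Hcone. reflexivity. }
      rewrite (Hu0 (h ∘ amor i)), (Hu0 (pi a ∘ u)); [reflexivity| |].
      * intros b hb. rewrite comp_assoc, Hcone. reflexivity.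
      * intros b hb. rewrite comp_assoc, Hh1. exact (proj1 (proj2 (Hc b hb))).
    + exact (zcomp Y _ z hz v a b0 hb0 h (c b0 hb0) (Hh1 b0 hb0) (proj1 (proj2 (proj2 (Hc b0 hb0))))).
    + intros b hb. rewrite Hh1. exact (proj1 (Hc b hb)).
Qed.

Lemma tower_lift {D : Category} (S : MorClass D) (i : arrow D)
  (HS : forall s, S s -> LiftingProp i s) (p : arrow D) : Post S p -> LiftingProp i p.
Proof.
  intros [w [z [hz [Y [L [pi [HT [[Hcone Hlim] ->]]]]]]]] u v Huv. simpl in *.
  pose proof (tower_main S i HS w z hz Y L pi HT Hcone u v Huv) as Main.
  pose (g := fun a => proj1_sig (constructive_indefinite_description _ (Main a))).
  assert (Hg : forall a, tG Y _ _ (amor i) L pi u z hz v a = Some (g a) /\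
      tgood Y _ _ (amor i) L pi u z hz v a (fun b _ => tG Y _ _ (amor i) L pi u z hz v b) (g a)).
  { intro a. exact (proj2_sig (constructive_indefinite_description _ (Main a))). }
  assert (Hgc : forall a b (h : wo_le w b a), dmap Y a b h ∘ g a = g b).
  { intros a b [hba|e].
    - destruct (Hg a) as [_ [_ [_ H3]]]. specialize (H3 b hba).
      rewrite (proj1 (Hg b)) in H3. injection H3 as H3. symmetry. exact H3.
    - subst b. rewrite dmap_id. apply comp_id_l. }
  destruct (Hlim _ g Hgc) as [hh [Hh1 _]].
  exists hh. split.
  - destruct (Hlim _ (fun b => pi b ∘ u)) as [u0 [_ Hu0]].
    { intros a b h. rewrite comp_assoc, Hcone. reflexivity. }
    rewrite (Hu0 (hh ∘ amor i)), (Hu0 u); [reflexivity| |].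
    + intros b. reflexivity.
    + intros b. rewrite comp_assoc, Hh1. exact (proj1 (proj2 (Hg b))).
  - rewrite Hh1. destruct (Hg z) as [_ [_ [H2 _]]]. rewrite dmap_id, comp_id_l in H2. exact H2.
Qed.
Ltac rassoc := repeat rewrite <- comp_assoc.

Lemma tcl {M : Category} (T : Monoidal M) (a b c d : Ob M) (f : Hom a b) (g : Hom b c) :
  tensm T (g ∘ f) (cid d) = tensm T g (cid d) ∘ tensm T f (cid d).
Proof. rewrite <- tensm_comp, comp_id_l. reflexivity. Qed.

Lemma tcr {M : Category} (T : Monoidal M) (a b c d : Ob M) (f : Hom a b) (g : Hom b c) :
  tensm T (cid d) (g ∘ f) = tensm T (cid d) g ∘ tensm T (cid d) f.
Proof. rewrite <- tensm_comp, comp_id_l. reflexivity. Qed.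

Lemma tswap {M : Category} (T : Monoidal M) (a a' b b' : Ob M) (f : Hom a a') (g : Hom b b') :
  tensm T (cid a') g ∘ tensm T f (cid b) = tensm T f (cid b') ∘ tensm T (cid a) g.
Proof. rewrite <- !tensm_comp, !comp_id_l, !comp_id_r. reflexivity. Qed.

Lemma ai_nat {M : Category} (T : Monoidal M) a b c a' b' c' (f : Hom a a') (g : Hom b b') (h : Hom c c') :
  assoc_inv T a' b' c' ∘ tensm T f (tensm T g h) = tensm T (tensm T f g) h ∘ assoc_inv T a b c.
Proof.
  transitivity (assoc_inv T a' b' c' ∘ (tensm T f (tensm T g h) ∘ (assoc T a b c ∘ assoc_inv T a b c))).
  { rewrite assoc_iso2, comp_id_r. reflexivity. }
  rewrite (comp_assoc _ _ _ _ _ (tensm T f (tensm T g h))), <- assoc_nat.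
  rassoc. rewrite (assoc_rw _ _ _ _ (assoc_iso1 _ _ _ _ _)), comp_id_l. reflexivity.
Qed.

Lemma tri_inv {M : Category} (T : Monoidal M) a b :
  tensm T (runit T a) (cid b) ∘ assoc_inv T a (munit T) b = tensm T (cid a) (lunit T b).
Proof.
  rewrite <- triangle. rassoc. rewrite assoc_iso2, comp_id_r. reflexivity.
Qed.

Lemma cofree_counit {M : Category} (T : Monoidal M) (C : Comonoid T) (X : Ob M) :
  tensm T (runit T X ∘ tensm T (cid X) (co_eps T C)) (cid (co_ob T C)) ∘ cofree_coact T C X = cid _.
Proof.
  unfold cofree_coact. rewrite tcl. rassoc.
  rewrite (assoc_rw _ _ _ _ (eq_sym (ai_nat T _ _ _ _ _ _ (cid X) (co_eps T C) (cid (co_ob T C))))).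
  rassoc. rewrite (assoc_rw _ _ _ _ (tri_inv T X (co_ob T C))).
  rewrite <- !tcr. rewrite co_lcounit, tensm_id. reflexivity.
Qed.

Lemma cofree_recon {M : Category} (T : Monoidal M) (C : Comonoid T) (A : Comodule T C) (X : Ob M)
  (u : Hom (cm_car T C A) (tens T X (co_ob T C)))
  (Hu : cofree_coact T C X ∘ u = tensm T u (cid (co_ob T C)) ∘ cm_coact T C A) :
  tensm T (runit T X ∘ tensm T (cid X) (co_eps T C) ∘ u) (cid (co_ob T C)) ∘ cm_coact T C A = u.
Proof.
  rewrite tcl, <- comp_assoc, <- Hu, comp_assoc, cofree_counit, comp_id_l. reflexivity.
Qed.

Lemma adj_core {M : Category} (T : Monoidal M) (C : Comonoid T) (A B : Comodule T C)
  (X1 X0 : Ob M) (y : Hom X1 X0) (i : ComodHom T C A B)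
  (u : Hom (cm_car T C A) (tens T X1 (co_ob T C)))
  (Hu : cofree_coact T C X1 ∘ u = tensm T u (cid (co_ob T C)) ∘ cm_coact T C A)
  (v : Hom (cm_car T C B) (tens T X0 (co_ob T C)))
  (Hv : cofree_coact T C X0 ∘ v = tensm T v (cid (co_ob T C)) ∘ cm_coact T C B)
  (Huv : tensm T y (cid (co_ob T C)) ∘ u = v ∘ ch_map T C _ _ i)
  (HL : LiftingProp (Arr (ch_map T C _ _ i)) (Arr y)) :
  exists h : Hom (cm_car T C B) (tens T X1 (co_ob T C)),
    cofree_coact T C X1 ∘ h = tensm T h (cid (co_ob T C)) ∘ cm_coact T C B /\
    h ∘ ch_map T C _ _ i = u /\ tensm T y (cid (co_ob T C)) ∘ h = v.
Proof.
  set (e1 := runit T X1 ∘ tensm T (cid X1) (co_eps T C)).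
  set (e0 := runit T X0 ∘ tensm T (cid X0) (co_eps T C)).
  assert (Hey : y ∘ e1 = e0 ∘ tensm T y (cid (co_ob T C))).
  { unfold e1, e0. rewrite comp_assoc, runit_nat. rassoc. f_equal.
    rewrite <- !tensm_comp, !comp_id_l, !comp_id_r. reflexivity. }
  unfold LiftingProp in HL; simpl in HL.
  destruct (HL (e1 ∘ u) (e0 ∘ v)) as [l [Hl1 Hl2]].
  { simpl. rewrite comp_assoc, Hey. rewrite <- (comp_assoc _ _ _ _ _ e0), Huv, comp_assoc. reflexivity. }
  simpl in Hl1, Hl2.
  exists (tensm T l (cid (co_ob T C)) ∘ cm_coact T C B). split; [|split].
  - unfold cofree_coact. rassoc.
    assert (E1 : tensm T (cid X1) (co_delta T C) ∘ tensm T l (cid (co_ob T C))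
                 = tensm T l (tensm T (cid (co_ob T C)) (cid (co_ob T C))) ∘ tensm T (cid (cm_car T C B)) (co_delta T C)).
    { rewrite tensm_id, <- !tensm_comp, !comp_id_l, !comp_id_r. reflexivity. }
    rewrite (assoc_rw _ _ _ _ E1). rassoc.
    rewrite <- (cm_coassoc T C B). rassoc.
    rewrite (assoc_rw _ _ _ _ (ai_nat T _ _ _ _ _ _ l (cid (co_ob T C)) (cid (co_ob T C)))). rassoc.
    rewrite (assoc_rw _ _ _ _ (assoc_iso1 _ _ _ _ _)), comp_id_l.
    rewrite tcl, comp_assoc. reflexivity.
  - rewrite <- comp_assoc, (ch_comm T C _ _ i), comp_assoc, <- tcl, Hl1.
    apply cofree_recon. exact Hu.
  - rewrite comp_assoc, <- tcl, Hl2. apply cofree_recon. exact Hv.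
Qed.

Lemma adj_lift {M : Category} (T : Monoidal M) (C : Comonoid T) (Y : MorClass M)
  (i g : arrow (Comod T C)) :
  TensC T C Y g -> (forall y, Y y -> LiftingProp (fmap_arrow (ForgetComod T C) i) y) ->
  LiftingProp i g.
Proof.
  intros [X1 [X0 [y [Hy [Hm [Hs Ht]]]]]] HL.
  destruct g as [P Q m]. destruct P as [p rp p1 p2], Q as [q rq q1 q2]. destruct m as [mm mc].
  simpl in Hm, Hs, Ht.
  dependent destruction Hs. dependent destruction Ht. 
  intros u v Huv.
  pose proof (f_equal (ch_map T C _ _) Huv) as Huv'. simpl in Huv'.
  destruct (adj_core T C _ _ X1 X0 y (amor i) (ch_map T C _ _ u) (ch_comm T C _ _ u)
              (ch_map T C _ _ v) (ch_comm T C _ _ v) Huv' (HL _ Hy)) as [h [Hh1 [Hh2 Hh3]]].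
  refine (ex_intro _ (Build_ComodHom T C (atgt i) (Build_Comodule T C _ (cofree_coact T C X1) p1 p2) h Hh1) _). split; apply ComodHom_eq; simpl; assumption.
Qed.

Lemma functor_retract {D E : Category} (F : Functor D E) (f g : arrow D) :
  IsRetract f g -> IsRetract (fmap_arrow F f) (fmap_arrow F g).
Proof.
  intros [i1 [r1 [i2 [r2 [H1 [H2 [H3 H4]]]]]]].
  exists (fmor F i1), (fmor F r1), (fmor F i2), (fmor F r2). simpl.
  rewrite <- !fmor_comp, H1, H2, H3, H4, !fmor_id. repeat split; reflexivity.
Qed.

Theorem theorem1
  (M : Category) (T : Monoidal M)
  (WE Cof Fib : MorClass M)
  (HM : IsModelStructure M WE Cof Fib)
  (X Z : MorClass M)
  (HP : PostnikovPresentation M WE Cof Fib X Z)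
  (C : Comonoid T)
  (Hlim : HasFiniteLimits (Comod T C))
  (Hcolim : HasFiniteColimits (Comod T C))
  (HPW : forall g, Post (TensC T C Z) g -> Preim T C WE g)
  (Hfa : HasFactorization (Preim T C Cof) (Post (TensC T C Z)))
  (Hfb : HasFactorization (ClassI (Preim T C Cof) (Preim T C WE)) (Post (TensC T C X))) :
  IsModelStructure (Comod T C) (Preim T C WE) (Preim T C Cof)
                   (RetClosure (Post (TensC T C X)))
  /\ LeftQuillen (ForgetComod T C) (Preim T C WE) (Preim T C Cof) WE Cof.
Proof.
  destruct HM as [_ [_ [HWid [HCid [HFid [H23 [HWr [HCr [HFr [HL1 [HL2 [HF1 HF2]]]]]]]]]]]].
  destruct HP as [HPX [HPZ _]].
  assert (XF : forall s, X s -> Fib s).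
  { intros [a b x] Hx. apply HPX. exists (Arr x). split; [apply single_post; exact Hx|apply retract_refl]. }
  assert (ZF : forall s, Z s -> Fib s /\ WE s).
  { intros [a b x] Hx. apply HPZ. exists (Arr x). split; [apply single_post; exact Hx|apply retract_refl]. }
  assert (FibLift : forall p i, RetClosure (Post (TensC T C X)) p -> Preim T C Cof i ->
            Preim T C WE i -> LiftingProp i p).
  { intros p i [q [Hq Hr]] Hc Hw. apply (lift_retract i p q Hr).
    apply (tower_lift (TensC T C X) i); [|exact Hq]. intros s Hs.
    apply (adj_lift T C X i s Hs). intros y Hy. apply HL1; [exact Hc|exact Hw|apply XF; exact Hy]. }
  assert (PZLift : forall q i, Post (TensC T C Z) q -> Preim T C Cof i -> LiftingProp i q).
  { intros q i Hq Hc. apply (tower_lift (TensC T C Z) i); [|exact Hq]. intros s Hs.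
    apply (adj_lift T C Z i s Hs). intros y Hy. destruct (ZF y Hy) as [Hy1 Hy2].
    apply HL2; assumption. }
  assert (FibChar : forall p, (forall i, Preim T C Cof i -> Preim T C WE i -> LiftingProp i p) ->
            RetClosure (Post (TensC T C X)) p).
  { intros [a b f] H. destruct (Hfb a b f) as [c [j [q [-> [[Hj1 Hj2] Hq]]]]].
    exists (Arr q). split; [exact Hq|]. apply retract_arg. apply H; assumption. }
  split.
  - split; [exact Hlim|]. split; [exact Hcolim|].
    split. { split. intros a. apply (proj1 HWid). intros a b c f g Hf Hg. apply (proj2 HWid); assumption. }
    split. { split. intros a. apply (proj1 HCid). intros a b c f g Hf Hg. apply (proj2 HCid); assumption. }
    split. { split.
      - intros a. apply FibChar. intros i _ _. apply lift_id.
      - intros a b c f g Hf Hg. apply FibChar. intros i Hc Hw. apply lift_comp; apply FibLift; assumption. }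
    split. { intros a b c f g. exact (H23 _ _ _ (ch_map T C _ _ f) (ch_map T C _ _ g)). }
    split. { intros f g Hr Hg. exact (HWr _ _ (functor_retract (ForgetComod T C) f g Hr) Hg). }
    split. { intros f g Hr Hg. exact (HCr _ _ (functor_retract (ForgetComod T C) f g Hr) Hg). }
    split. { intros f g Hr Hg. apply FibChar. intros i Hc Hw. apply (lift_retract i f g Hr).
             apply FibLift; assumption. }
    split. { intros i p Hc Hw Hf. apply FibLift; assumption. }
    split. { intros i [a b f] Hc Hf Hw.
      destruct (Hfa a b f) as [c [j [q [-> [Hj Hq]]]]].
      assert (Hqw : Preim T C WE (Arr q)) by (apply HPW; exact Hq).
      assert (Hjw : Preim T C WE (Arr j)).
      { exact (proj2 (proj2 (H23 _ _ _ (ch_map T C _ _ j) (ch_map T C _ _ q))) Hqw Hw). }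
      pose proof (retract_arg _ _ _ j q (FibLift _ _ Hf Hj Hjw)) as Hr.
      apply (lift_retract i _ _ Hr). apply PZLift; assumption. }
    split.
    + intros a b f. destruct (Hfb a b f) as [c [j [q [E [Hj Hq]]]]].
      exists c, j, q. split; [exact E|]. split; [exact Hj|]. exists (Arr q). split; [exact Hq|apply retract_refl].
    + intros a b f. destruct (Hfa a b f) as [c [j [q [E [Hj Hq]]]]].
      exists c, j, q. split; [exact E|]. split; [exact Hj|]. split.
      * apply FibChar. intros i Hc _. apply PZLift; assumption.
      * apply HPW; exact Hq.
  - split.
    + intros g Hg. exact Hg.
    + intros g Hg Hw. split; assumption.
Qed.
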